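(* Let $X$ be a compact Hausdorff space with its unique compatible uniform structure $\mathfrak{U}$, and let $\sim$ be a topologically quasiconvex equivalence relation on $X$. For $A\subseteq X/\!\sim$ put $\sim_A\ =\Delta X\cup\bigcup_{[x]\in A}[x]\times[x]$. Then for every $A\subseteq X/\!\sim$, the quotient space $X/\!\sim_A$ is Hausdorff.
   Context: A subset $S$ is $u$-small (for an entourage $u$) if $S\times S\subseteq u$. An equivalence relation $\sim$ on a compact Hausdorff space $X$ is topologically quasiconvex if every equivalence class $[q]$ is closed and, for every $u\in\mathfrak{U}$, only finitely many equivalence classes are not $u$-small. *)

(* Defs.v *)
From HB Require Import structures.
From mathcomp Require Import all_boot all_order all_algebra generic_quotient.
From mathcomp Require Import all_classical all_reals all_analysis.
Set Implicit Arguments. Unset Strict Implicit. Unset Printing Implicit Defensive.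
Local Open Scope classical_set_scope.

Definition small (X : Type) (u : set (X * X)) (S : set X) : Prop :=
  S `*` S `<=` u.

Definition eqclass (X : Type) (R : X -> X -> Prop) (q : X) : set X :=
  [set y | R q y].

Definition classes (X : Type) (R : X -> X -> Prop) : set (set X) :=
  [set eqclass R q | q in setT].

Definition is_equivalence (X : Type) (R : X -> X -> Prop) : Prop :=
  (forall x, R x x) /\ (forall x y, R x y -> R y x) /\
  (forall x y z, R x y -> R y z -> R x z).

Definition top_quasiconvex (X : uniformType) (R : X -> X -> Prop) : Prop :=
  is_equivalence R /\
  (forall q : X, closed (eqclass R q)) /\
  (forall u, entourage u -> finite_set [set C | classes R C /\ ~ small u C]).

Definition simA (X : Type) (A : set (set X)) (x y : X) : Prop :=
  x = y \/ exists2 C, A C & C x /\ C y.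

Section SimARel.
Variables (X : Type) (R : X -> X -> Prop) (A : set (set X)).
Hypothesis HR : is_equivalence R.
Hypothesis HA : A `<=` classes R.

Definition simAb (x y : X) : bool := `[< simA A x y >].

Lemma simAb_refl : reflexive simAb.
Proof. by move=> x; apply/asboolP; left. Qed.

Lemma simAb_sym : symmetric simAb.
Proof.
move=> x y; apply/asboolP/asboolP => -[->|[C AC [? ?]]]; (try by left);
  by right; exists C.
Qed.

Lemma simAb_trans : transitive simAb.
Proof.
move=> y x z /asboolP [<-|[C AC [Cx Cy]]] /asboolP // [<-|[D AD [Dy Dz]]].
- by apply/asboolP; right; exists C.
- apply/asboolP; right; exists C => //; split => //.
  move: (HA AC) (HA AD) => [p _ Cp] [q _ Dq].
  case: HR => _ [Hs Ht]; move: Cx Cy Dy Dz; rewrite -Cp -Dq /eqclass /=.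
  move=> px py qy qz; apply: (Ht _ q) => //.
  by apply: (Ht _ y) => //; apply: Hs.
Qed.

Definition simA_rel : equiv_rel X := EquivRel simAb simAb_refl simAb_sym simAb_trans.
End SimARel.

(* Main.v *)
Require Import Defs.
From HB Require Import structures.
From mathcomp Require Import all_boot all_order all_algebra generic_quotient.
From mathcomp Require Import all_classical all_reals all_analysis.
Local Open Scope classical_set_scope.
Local Open Scope quotient_scope.

Definition cls (X : Type) (A : set (set X)) (x : X) := [set z | simA A x z].
Arguments cls {X}.
Lemma sep_closed (T : topologicalType) : hausdorff_space T -> compact [set: T] ->
  forall K L : set T, closed K -> closed L -> K `&` L = set0 ->
  exists U V, [/\ open U, open V, K `<=` U, L `<=` V & U `&` V = set0].
Proof.
move=> hT cT K L cK cL KL.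
have nT := compact_normal hT cT.
have : set_nbhs K (~` L).
  apply/set_nbhsP; exists (~` L); split => //; first exact: closed_openC.
  by move=> z Kz Lz; have : (K `&` L) z by []; rewrite KL.
case/(nT K cK) => V /set_nbhsP [W [oW KW WV]] clV.
exists W, (~` closure V); split => //.
- exact/closed_openC/closed_closure.
- by move=> z Lz clz; exact: (clV z clz Lz).
- rewrite -subset0 => z [Wz]; apply; apply: subset_closure; exact: WV.
Qed.


Lemma classes_same (X : Type) (R : X -> X -> Prop) (hR : is_equivalence R)
  (C D : set X) z : classes R C -> classes R D -> C z -> D z -> C = D.
Proof.
move: hR; rewrite /is_equivalence => -[_ [hs ht]] [p _ <-] [q _ <-]; rewrite /eqclass /= => pz qz.
apply/seteqP; split => y /= H.
- exact: (ht _ _ _ (ht _ _ _ qz (hs _ _ pz)) H).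
- exact: (ht _ _ _ (ht _ _ _ pz (hs _ _ qz)) H).
Qed.

Lemma cls_eq (X : Type) (R : X -> X -> Prop) (hR : is_equivalence R)
  (A : set (set X)) (hA : A `<=` classes R) x y :
  simA A x y -> cls A x = cls A y.
Proof.
move=> xy.
have P a b : simAb A a b <-> simA A a b by split => /asboolP.
have T := simAb_trans hR hA.
apply/seteqP; split => z /= H; apply/P.
- by apply: (T x); [rewrite simAb_sym|]; apply/P.
- by apply: (T y); apply/P.
Qed.

Lemma cls_closed (X : uniformType) (hT : hausdorff_space X)
  (R : X -> X -> Prop) (hR : top_quasiconvex R)
  (A : set (set X)) (hA : A `<=` classes R) x : closed (cls A x).
Proof.
case: (pselect (exists2 C, A C & C x)) => [[C AC Cx]|nC].
- have -> : cls A x = C.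
    apply/seteqP; split => z /=.
    + case=> [<-//|[D AD [Dx Dz]]].
      by rewrite (@classes_same _ _ hR.1 _ _ _ (hA _ AC) (hA _ AD) Cx Dx).
    + by move=> Cz; right; exists C.
  by case: (hA _ AC) => q _ <-; exact: hR.2.1.
- have -> : cls A x = [set x].
    apply/seteqP; split => z /=.
    + case=> [<-//|[D AD [Dx Dz]]].
      by exfalso; apply: nC; exists D.
    + by move=> ->; left.
  exact/accessible_closed_set1/hausdorff_accessible.
Qed.

Lemma G_open (X : uniformType) (R : X -> X -> Prop) (A : set (set X)) (hR : top_quasiconvex R) (hA : A `<=` classes R)
  (O : set X) : open O -> open [set z : X | cls A z `<=` O].
Proof.
move=> oO; rewrite openE => z /= Hz.
have Oz : nbhs z O by apply: open_nbhs_nbhs; split => //; apply: Hz; left.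
case/nbhsP: Oz => e ent sub.
pose w := split_ent e.
have fin := hR.2.2 w (entourage_split_ent ent).
pose Bad := [set C | ([set C | classes R C /\ ~ small w C] C) /\ A C /\ ~ C `<=` O].
have finB : finite_set Bad.
  by apply: sub_finite_set fin => C [].
have clB : closed (\bigcup_(C in Bad) C).
  apply: closed_bigcup finB _ => C [[[q _ <-] _] _]; exact: hR.2.1.
have zB : ~ (\bigcup_(C in Bad) C) z.
  case => C [_ [AC nCO]] Cz; apply: nCO => d Cd; apply: Hz; right; exists C => //.
have nz : nbhs z (~` \bigcup_(C in Bad) C).
  by apply: open_nbhs_nbhs; split => //; exact: closed_openC.
apply: (filterS _ (filterI (nbhs_entourage z (entourage_split_ent ent)) nz)).
move=> z' [wzz' nU] d [<-|[C AC [Cz' Cd]]].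
- apply: sub; move: wzz'; rewrite /xsection /= !inE => H; exact: (split_ent_subset ent H).
- case: (pselect (small w C)) => sm.
  + apply: sub; rewrite /xsection /= inE; apply: (subset_split_ent ent); exists z'.
      by move: wzz'; rewrite /xsection /= inE.
    exact: (sm (z', d)).
  + case: (pselect (C `<=` O)) => [|nCO]; first by apply.
    by exfalso; apply: nU; exists C => //; split => //; split => //; exact: hA.
Qed.

Theorem mainTheorem8 (X : uniformType) (hcpt : compact [set: X])
  (hT2 : hausdorff_space X) (R : X -> X -> Prop) (hR : top_quasiconvex R)
  (A : set (set X)) (hA : A `<=` classes R) :
  hausdorff_space
    (quotient_topology {eq_quot simA_rel (proj1 hR) hA}).
Proof.
set Q := quotient_topology _.
have piE z : simA A (repr (\pi_Q z)) z.
  apply/asboolP; apply/(@eqquotP _ _ {eq_quot simA_rel (proj1 hR) hA}); exact: (reprK (\pi_Q z)).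
have preE (O : set X) :
    \pi_Q @^-1` [set q : Q | cls A (repr q) `<=` O] = [set z | cls A z `<=` O].
  apply/seteqP; split => z /=; by rewrite (@cls_eq _ _ (proj1 hR) _ hA _ _ (piE z)).
rewrite open_hausdorff => a b ab.
pose x := repr a; pose y := repr b.
have nxy : ~ simA A x y.
  move=> H; move/negP: ab; apply; apply/eqP.
  rewrite -(reprK a) -(reprK b); apply/eqquotP; apply/asboolP; exact: H.
have disj : cls A x `&` cls A y = set0.
  rewrite -subset0 => z [xz yz]; apply: nxy; apply/asboolP.
  apply: (simAb_trans hR.1 hA (y := z)); apply/asboolP => //.
  by case: yz => [->|[C AC [Cy Cz]]]; [left|right; exists C].
case: (@sep_closed _ hT2 hcpt _ _
  (@cls_closed _ hT2 _ hR _ hA x) (@cls_closed _ hT2 _ hR _ hA y) disj).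
move=> U1 [U2 [oU1 oU2 sU1 sU2 U12]].
exists ([set q : Q | cls A (repr q) `<=` U1], [set q : Q | cls A (repr q) `<=` U2]).
  by split; rewrite inE.
split.
- by move: (@G_open _ _ _ hR hA _ oU1); rewrite -preE.
- by move: (@G_open _ _ _ hR hA _ oU2); rewrite -preE.
- apply/eqP; rewrite -subset0 => q [H1 H2].
  have : (U1 `&` U2) (repr q) by split; [apply: H1|apply: H2]; left.
  by rewrite U12.
Qed.
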